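(* For all positive integers $n$ and $k$, \[ |\mathrm{Hom}(P_n,P_k)| \;=\; k\cdot 2^{n-1} \;-\; \sum_{i=0}^{n-2} 2^{\,n-1-i}\sum_{j\in\mathbb Z}\left(\binom{i}{\lceil i/2\rceil - j(k+1)} - \binom{i}{\lfloor (i+k+1)/2\rfloor - j(k+1)}\right). \]
   Context: All graphs are finite, undirected, without loops or multiple edges. For a positive integer $m$, $P_m$ denotes the path with vertex set $[m]=\{1,\dots,m\}$ in which $i$ and $j$ are adjacent iff $|i-j|=1$. A homomorphism $G\to H$ is a map $f:V(G)\to V(H)$ sending adjacent vertices to adjacent vertices; $\mathrm{Hom}(G,H)$ is the set of such maps. Convention: $\binom{a}{b}=0$ if $b<0$ or $b>a$ (so each inner sum over $j$ is finite). *)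

(* Defs.v *)
From HB Require Import structures.
From mathcomp Require Import all_boot all_order all_algebra.
Set Implicit Arguments. Unset Strict Implicit. Unset Printing Implicit Defensive.
Import Order.TTheory GRing.Theory Num.Theory.

(* The path P_m, with vertex set 'I_m = {0,...,m-1} (a relabelling of [m] = {1..m}
   by i |-> i-1); i ~ j iff |i - j| = 1. *)
Definition path_adj (m : nat) (i j : 'I_m) : bool :=
  (i.+1 == j :> nat) || (j.+1 == i :> nat).

Definition is_hom (n k : nat) (f : {ffun 'I_n -> 'I_k}) : bool :=
  [forall i : 'I_n, forall j : 'I_n, path_adj i j ==> path_adj (f i) (f j)].

Definition Hom_path (n k : nat) : {set {ffun 'I_n -> 'I_k}} :=
  [set f | is_hom f].

(* Binomial coefficient with integer lower index: binom(a, b) = 0 if b < 0;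
   for b > a, 'C(a, b) = 0 already. *)
Definition binz (a : nat) (b : int) : int :=
  match b with
  | Posz c => ('C(a, c))%:Z
  | Negz _ => 0%R
  end.

(* Finite truncation of a sum over j in Z: sum over j in [-N, N]. *)
Definition zsum_upto (N : nat) (F : int -> int) : int :=
  (\sum_(t < (N + N).+1) F (t%:Z - N%:Z))%R.

(* Main.v *)
Require Import Defs.
From HB Require Import structures.
From mathcomp Require Import all_boot all_order all_algebra.
From mathcomp Require Import zify ring lra.
Import Order.TTheory GRing.Theory Num.Theory.
Local Open Scope ring_scope.

Definition ind (b : bool) : int := if b then 1 else 0.
Definition fl (y : int) : int := divz y 2.

Lemma binzE i (c : int) :
  binz i c = if (0 <= c) && (c <= i%:Z) then ('C(i, `|c|%N))%:Z else 0.
Proof.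
case: c => [m|m] /=.
  rewrite lez_nat; case: (leqP m i) => h //.
  by rewrite bin_small.
by [].
Qed.

Lemma binz0 (c : int) : binz 0 c = ind (c == 0).
Proof.
rewrite binzE /ind; case: ifP => h.
  have -> : c = 0 by lia.
  by rewrite eqxx.
case: ifP => // /eqP c0; subst c; by rewrite lexx in h.
Qed.

Lemma binzS i (c : int) : binz i.+1 c = binz i c + binz i (c - 1).
Proof.
case: c => [[|m]|m] //=.
  by rewrite !bin0.
by rewrite binS PoszD subn1.
Qed.

Lemma binz_sym i (c : int) : binz i c = binz i (i%:Z - c).
Proof.
rewrite !binzE.
have -> : (0 <= i%:Z - c) && (i%:Z - c <= i%:Z) = (0 <= c) && (c <= i%:Z) by lia.
case: ifP => // h.
have -> : `|i%:Z - c|%N = (i - `|c|)%N by lia.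
by rewrite bin_sub //; lia.
Qed.

Definition A0 (k : nat) (e : int) : int :=
  ind (dvdz (k.+1)%:Z (fl (- e))) - ind (dvdz (k.+1)%:Z (fl ((k.+1)%:Z - e))).

Fixpoint T (k : nat) (i : nat) (e : int) : int :=
  match i with
  | 0 => A0 k e
  | i'.+1 => T k i' (e - 1) + T k i' (e + 1)
  end.

Fixpoint D (k : nat) (i : nat) (e : int) : int :=
  match i with
  | 0 => ind ((0 <= e) && (e < k%:Z))
  | i'.+1 => if (0 <= e) && (e < k%:Z) then D k i' (e - 1) + D k i' (e + 1) else 0
  end.

Lemma dvdz_opp d m : dvdz d (- m) = dvdz d m.
Proof. by rewrite /dvdz abszN. Qed.

Lemma dvdz_addq d m q : dvdz d (m + q * d) = dvdz d m.
Proof.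
apply/idP/idP => /dvdzP [r h]; apply/dvdzP.
  by exists (r - q); rewrite mulrBl -h; ring.
by exists (r + q); rewrite mulrDl h.
Qed.

Lemma dvdz_0 d : dvdz d 0 = true.
Proof. exact: dvdn0. Qed.

Lemma A0_sym1 k e e' : e + e' = -1 -> A0 k e = A0 k e'.
Proof.
move=> h; have -> : e = -1 - e' by lia.
rewrite /A0.
have -> : fl (- (-1 - e')) = - fl (- e') by rewrite /fl; lia.
have -> : fl ((k.+1)%:Z - (-1 - e')) = - fl ((k.+1)%:Z - e') + 1 * (k.+1)%:Z
  by rewrite /fl; lia.
by rewrite dvdz_addq !dvdz_opp.
Qed.

Lemma A0_sym2 k e e' : e + e' = 2 * (k.+1)%:Z - 1 -> A0 k e = A0 k e'.
Proof.
move=> h; have -> : e = 2 * (k.+1)%:Z - 1 - e' by lia.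
rewrite /A0.
have -> : fl (- (2 * (k.+1)%:Z - 1 - e')) = - fl (- e') + (-1) * (k.+1)%:Z
  by rewrite /fl; lia.
have -> : fl ((k.+1)%:Z - (2 * (k.+1)%:Z - 1 - e')) = - fl ((k.+1)%:Z - e')
  by rewrite /fl; lia.
by rewrite dvdz_addq !dvdz_opp.
Qed.

Lemma T_sym k c : (forall e e', e + e' = c -> A0 k e = A0 k e') ->
  forall i e e', e + e' = c -> T k i e = T k i e'.
Proof.
move=> hA; elim=> [|i IH] e e' h /=; first exact: hA.
rewrite addrC (IH (e - 1) (e' + 1)); last by lia.
by rewrite (IH (e + 1) (e' - 1)) //; lia.
Qed.

Lemma D_out k i e : ~~ ((0 <= e) && (e < k%:Z)) -> D k i e = 0.
Proof. by case: i => [|i] /= /negbTE ->. Qed.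

Lemma not_dvdz (K : nat) (c : int) : (0 < `|c|%N < K)%N -> ~~ dvdz K%:Z c.
Proof.
move=> /andP [h1 h2]; apply/negP; rewrite /dvdz /= => /(dvdn_leq h1).
by rewrite leqNgt h2.
Qed.

Lemma D_S k i e : (0 <= e) && (e < k%:Z) -> D k i.+1 e = D k i (e - 1) + D k i (e + 1).
Proof. by move=> /= ->. Qed.

Lemma A0_base k e : (0 < k)%N -> 0 <= e <= k%:Z ->
  A0 k e = ind ((0 <= e) && (e < k%:Z)) - ind ((0 <= e - 1) && (e - 1 < k%:Z)).
Proof.
move=> hk /andP [h1 h2]; rewrite /A0.
have [e0|[e0|e0]] : e = 0 \/ (0 < e < k%:Z) \/ e = k%:Z by lia.
- have -> : fl (- e) = 0 by rewrite /fl; lia.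
  rewrite dvdz_0.
  have -> : dvdz (k.+1)%:Z (fl ((k.+1)%:Z - e)) = false.
    by apply/negbTE/not_dvdz; rewrite /fl; lia.
  have -> : (0 <= e) && (e < k%:Z) = true by lia.
  have -> : (0 <= e - 1) && (e - 1 < k%:Z) = false by lia.
  by [].
- have -> : dvdz (k.+1)%:Z (fl (- e)) = false.
    by apply/negbTE/not_dvdz; rewrite /fl; lia.
  have -> : dvdz (k.+1)%:Z (fl ((k.+1)%:Z - e)) = false.
    by apply/negbTE/not_dvdz; rewrite /fl; lia.
  have -> : (0 <= e) && (e < k%:Z) = true by lia.
  have -> : (0 <= e - 1) && (e - 1 < k%:Z) = true by lia.
  by [].
- have -> : dvdz (k.+1)%:Z (fl (- e)) = false.
    by apply/negbTE/not_dvdz; rewrite /fl; lia.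
  have -> : fl ((k.+1)%:Z - e) = 0 by rewrite /fl; lia.
  rewrite dvdz_0.
  have -> : (0 <= e) && (e < k%:Z) = false by lia.
  have -> : (0 <= e - 1) && (e - 1 < k%:Z) = true by lia.
  by [].
Qed.

Lemma DT k i e : (0 < k)%N -> 0 <= e <= k%:Z -> D k i e - D k i (e - 1) = T k i e.
Proof.
move=> hk; elim: i e => [|i IH] e he.
  by rewrite /= A0_base.
have Ts1 := @T_sym k _ (@A0_sym1 k) i.
have Ts2 := @T_sym k _ (@A0_sym2 k) i.
rewrite [T k i.+1 e]/=.
have [e0|[e0|e0]] : e = 0 \/ (0 < e < k%:Z) \/ e = k%:Z by lia.
- have hA : D k i.+1 e = D k i (e - 1) + D k i (e + 1) by apply: D_S; lia.
  have hB : D k i.+1 (e - 1) = 0 by apply: D_out; lia.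
  have hC : D k i (e - 1) = 0 by apply: D_out; lia.
  have hT : T k i (e - 1) = T k i e by apply: Ts1; lia.
  have i1 : D k i e - D k i (e - 1) = T k i e by apply: IH; lia.
  have i2 : D k i (e + 1) - D k i (e + 1 - 1) = T k i (e + 1) by apply: IH; lia.
  rewrite addrK in i2.
  rewrite hA hB hT -i1 -i2 hC; ring.
- have hA : D k i.+1 e = D k i (e - 1) + D k i (e + 1) by apply: D_S; lia.
  have hB : D k i.+1 (e - 1) = D k i (e - 1 - 1) + D k i (e - 1 + 1) by apply: D_S; lia.
  have i1 : D k i (e - 1) - D k i (e - 1 - 1) = T k i (e - 1) by apply: IH; lia.
  have i2 : D k i (e + 1) - D k i (e + 1 - 1) = T k i (e + 1) by apply: IH; lia.
  rewrite addrK in i2; rewrite subrK in hB.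
  rewrite hA hB -i1 -i2; ring.
- have hA : D k i.+1 e = 0 by apply: D_out; lia.
  have hB : D k i.+1 (e - 1) = D k i (e - 1 - 1) + D k i (e - 1 + 1) by apply: D_S; lia.
  have hC : D k i e = 0 by apply: D_out; lia.
  have hT : T k i (e + 1) = T k i e by apply: Ts2; lia.
  have i1 : D k i (e - 1) - D k i (e - 1 - 1) = T k i (e - 1) by apply: IH; lia.
  have i2 : D k i e - D k i (e - 1) = T k i e by apply: IH; lia.
  rewrite subrK in hB.
  rewrite hA hB hT -i1 -i2 hC; ring.
Qed.

Definition Zg (k N i : nat) (e : int) : int :=
  zsum_upto N (fun j : int =>
    binz i (fl (i%:Z - e) - j * (k.+1)%:Z)
    - binz i (fl (i%:Z + (k.+1)%:Z - e) - j * (k.+1)%:Z)).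

Lemma binzS' i (x d : int) : binz i.+1 (x - d) = binz i (x - d) + binz i (x - 1 - d).
Proof. by rewrite binzS; congr (_ + binz i _); ring. Qed.

Lemma Zg_S k N i e : Zg k N i.+1 e = Zg k N i (e - 1) + Zg k N i (e + 1).
Proof.
rewrite /Zg /zsum_upto -big_split; apply: eq_bigr => t _ /=.
have h1 : fl ((i.+1)%:Z - e) = fl (i%:Z - (e - 1)) by rewrite /fl; lia.
have h2 : fl (i%:Z - (e + 1)) = fl (i%:Z - (e - 1)) - 1 by rewrite /fl; lia.
have h3 : fl ((i.+1)%:Z + (k.+1)%:Z - e) = fl (i%:Z + (k.+1)%:Z - (e - 1))
  by rewrite /fl; lia.
have h4 : fl (i%:Z + (k.+1)%:Z - (e + 1)) = fl (i%:Z + (k.+1)%:Z - (e - 1)) - 1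
  by rewrite /fl; lia.
rewrite h1 h2 h3 h4 !binzS'; ring.
Qed.

Lemma ind_sum (N K : nat) (c : int) : (0 < K)%N -> `|c| <= (N * K)%N%:Z ->
  \sum_(t < (N + N).+1) ind (c - (t%:Z - N%:Z) * K%:Z == 0) = ind (dvdz K%:Z c).
Proof.
move=> hK hc.
case: (boolP (dvdz K%:Z c)) => h.
  move/dvdzP: h => [q hq].
  have hq' : `|q| <= N%:Z.
    rewrite hq in hc; nia.
  have ht0 : (absz (q + N%:Z)%R < (N + N).+1)%N by lia.
  rewrite (bigD1 (Ordinal ht0)) //= big1.
    have -> : (absz (q + N%:Z)%R)%:Z = q + N%:Z by lia.
    have -> : c - (q + N%:Z - N%:Z) * K%:Z == 0 by apply/eqP; rewrite hq; ring.
    by rewrite addr0.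
  move=> t ht; have -> // : (c - (t%:Z - N%:Z) * K%:Z == 0) = false.
  apply/negbTE/negP => /eqP h0.
  have hm : q * K%:Z = (t%:Z - N%:Z) * K%:Z by rewrite -hq; lia.
  have := mulIf (_ : K%:Z != 0) hm => hq2.
  move/negP: ht; apply; apply/eqP/val_inj => /=; lia.
rewrite big1 // => t _.
have -> // : (c - (t%:Z - N%:Z) * K%:Z == 0) = false.
apply/negbTE/negP => /eqP h0; move/negP: h; apply.
apply/dvdzP; exists (t%:Z - N%:Z); lia.
Qed.

Lemma T_Zg k N i e : (0 < k)%N -> (0 < N)%N -> i%:Z + `|e| <= N%:Z -> T k i e = Zg k N i e.
Proof.
move=> hk hN; elim: i e => [|i IH] e he.
  rewrite /= /Zg /zsum_upto.
  under eq_bigr do rewrite !binz0.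
  have hNK : (N + k <= N * k.+1)%N.
    nia.
  rewrite sumrB !ind_sum //.
  - by rewrite /A0 sub0r add0r.
  - rewrite /fl; lia.
  - rewrite /fl; lia.
rewrite Zg_S -(IH (e - 1)) -?(IH (e + 1)) //; lia.
Qed.

Lemma Bsym (N K i : nat) :
  \sum_(t < (N + N).+1) binz i ((i./2)%:Z - (t%:Z - N%:Z) * K%:Z) =
  \sum_(t < (N + N).+1) binz i ((uphalf i)%:Z - (t%:Z - N%:Z) * K%:Z).
Proof.
rewrite uphalf_half.
have hi := odd_double_half i.
case hodd: (odd i) hi => /= hi; first last.
  by rewrite add0n.
rewrite (reindex_inj rev_ord_inj) /=.
apply: eq_bigr => t _; rewrite binz_sym; congr binz.
have := ltn_ord t; move: hi; rewrite -muln2 => hi ht.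
rewrite subSS.
have -> : ((N + N - t)%N : int) = N%:Z + N%:Z - t%:Z by lia.
rewrite -{1}hi !PoszD PoszM; ring.
Qed.

Lemma D0_formula k N i : (0 < k)%N -> (i < N)%N ->
  D k i 0 = zsum_upto N (fun j : int =>
          binz i ((uphalf i)%:Z - j * (k.+1)%:Z)
          - binz i (((i + k.+1)./2)%:Z - j * (k.+1)%:Z)).
Proof.
move=> hk hiN.
have hD : D k i (0 - 1) = 0 by apply: D_out.
rewrite -[D k i 0]subr0 -{2}hD DT //.
rewrite (@T_Zg k N) //; last by rewrite normr0 addr0; lia.
rewrite /Zg /fl !subr0 -PoszD !divz_nat !divn2 /zsum_upto !sumrB.
by rewrite Bsym.
by apply: leq_ltn_trans hiN.
Qed.
Lemma adj_sym m (i j : 'I_m) : path_adj i j = path_adj j i.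
Proof. by rewrite /path_adj orbC. Qed.

Lemma is_homP n k (f : {ffun 'I_n -> 'I_k}) :
  reflect (forall i j, path_adj i j -> path_adj (f i) (f j)) (is_hom f).
Proof.
apply: (iffP forallP) => [h i j|h i].
  by move: (h i) => /forallP /(_ j) /implyP.
by apply/forallP => j; apply/implyP; apply: h.
Qed.

Lemma card_part (T : finType) k (P : pred T) (g : T -> 'I_k) (Q : pred 'I_k) :
  #|[set x | P x && Q (g x)]| = (\sum_(u | Q u) #|[set x | P x && (g x == u)]|)%N.
Proof.
rewrite -sum1_card (partition_big g Q); last by move=> x; rewrite inE => /andP [].
apply: eq_bigr => u Qu; rewrite -sum1_card; apply: eq_bigl => x; rewrite !inE.
by case: (eqVneq (g x) u) => [->|]; rewrite ?Qu ?andbT ?andbF.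
Qed.

Definition S k m (v : 'I_k) := [set f : {ffun 'I_m.+1 -> 'I_k} | is_hom f && (f ord_max == v)].

Definition restr k m (f : {ffun 'I_m.+2 -> 'I_k}) : {ffun 'I_m.+1 -> 'I_k} :=
  [ffun j => f (lift ord_max j)].

Definition extd k m (h : {ffun 'I_m.+1 -> 'I_k}) (v : 'I_k) : {ffun 'I_m.+2 -> 'I_k} :=
  [ffun i => if unlift ord_max i is Some j then h j else v].

Lemma adj_lift m (i j : 'I_m.+1) :
  path_adj (lift ord_max i) (lift ord_max j) = path_adj i j.
Proof. by rewrite /path_adj !lift_max. Qed.

Lemma cardS_step k m (v : 'I_k) :
  #|S k m.+1 v| = #|[set h : {ffun 'I_m.+1 -> 'I_k} | is_hom h && path_adj (h ord_max) v]|.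
Proof.
rewrite -(@card_in_imset _ _ (@restr k m)); last first.
  move=> f1 f2; rewrite !inE => /andP [_ /eqP h1] /andP [_ /eqP h2] e.
  apply/ffunP => i; case: (unliftP ord_max i) => [j ->|->].
    by move/ffunP: e => /(_ j); rewrite !ffunE.
  by rewrite h1 h2.
apply: eq_card => h; rewrite [in RHS]inE; apply/imsetP/idP.
  move=> [f]; rewrite inE => /andP [/is_homP hf /eqP fv] ->.
  apply/andP; split.
    by apply/is_homP => i j a; rewrite !ffunE; apply: hf; rewrite adj_lift.
  rewrite ffunE -fv; apply: hf.
  by rewrite /path_adj lift_max /= eqxx.
move=> /andP [/is_homP hh ha]; exists (extd _ _ h v).
  rewrite inE /extd ffunE unlift_none eqxx andbT.
  apply/is_homP => i j; rewrite !ffunE.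
  case: (unliftP ord_max i) => [i' ->|->]; case: (unliftP ord_max j) => [j' ->|->].
  - by rewrite adj_lift; apply: hh.
  - rewrite /path_adj lift_max /= => /orP [/eqP e|/eqP e]; last by move: (ltn_ord i') => /= ?; lia.
    have -> : i' = ord_max by apply: val_inj => /=; move: e => /= ?; lia.
    exact: ha.
  - rewrite /path_adj lift_max /= => /orP [/eqP e|/eqP e]; first by move: (ltn_ord j') => /= ?; lia.
    have -> : j' = ord_max by apply: val_inj => /=; move: e => /= ?; lia.
    by rewrite orbC; exact: ha.
  - by rewrite /path_adj /=; lia.
apply/ffunP => j; rewrite !ffunE liftK //.
Qed.

Lemma sum_pick k (g : int -> int) (w : int) :
  (forall e, ~~ ((0 <= e) && (e < k%:Z)) -> g e = 0) ->
  \sum_(u : 'I_k | (u%:Z == w)) g u%:Z = g w.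
Proof.
move=> hg.
case: (boolP ((0 <= w) && (w < k%:Z))) => hw; last first.
  rewrite big_pred0 ?hg // => u; apply/negbTE/negP => /eqP e.
  by move/negP: hw; apply; rewrite -e; move: (ltn_ord u) => ?; lia.
have hw' : (absz w < k)%N by lia.
rewrite (bigD1 (Ordinal hw')) /=; last by apply/eqP; lia.
rewrite big_pred0; first by rewrite addr0 /= (_ : (absz w)%:Z = w) //; lia.
move=> u; apply/negbTE/negP => /andP [/eqP e1 /eqP]; apply.
by apply: val_inj => /=; lia.
Qed.

Lemma cardS k m (v : 'I_k) : (#|S k m v|)%:Z = D k m v.
Proof.
elim: m v => [|m IH] v.
  have -> : S k 0 v = [set [ffun => v]].
    apply/setP => f; rewrite !inE.
    have hf : is_hom f.
      by apply/is_homP => i j; rewrite /path_adj; move: (ltn_ord i) (ltn_ord j) => /= ? ?; lia.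
    rewrite hf /=; apply/eqP/eqP => [e|->]; last by rewrite ffunE.
    apply/ffunP => i; rewrite ffunE -e; congr (f _); apply: val_inj => /=.
    by move: (ltn_ord i) => /= ?; lia.
  rewrite cards1 /= /ind.
  by move: (ltn_ord v) => ?; case: ifP => //; lia.
rewrite cardS_step.
rewrite (@card_part _ k (fun h => is_hom h) (fun h : {ffun 'I_m.+1 -> 'I_k} => h ord_max)
                   (fun u => path_adj u v)).
rewrite (big_morph Posz PoszD (erefl _)).
under eq_bigr do rewrite -/(S k m _) IH.
rewrite D_S; last by move: (ltn_ord v) => ?; lia.
rewrite (bigID (fun u : 'I_k => u%:Z == v%:Z - 1)) /=.
have hz : forall e, ~~ ((0 <= e) && (e < k%:Z)) -> D k m e = 0 by move=> e; apply: D_out.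
rewrite -(@sum_pick k _ (v%:Z - 1) hz) -(@sum_pick k _ (v%:Z + 1) hz).
congr (_ + _); apply: eq_bigl => u; rewrite /path_adj; lia.
Qed.

Lemma D_sym k i e e' : e + e' = k%:Z - 1 -> D k i e = D k i e'.
Proof.
elim: i e e' => [|i IH] e e' h /=.
  by congr ind; lia.
have -> : (0 <= e') && (e' < k%:Z) = (0 <= e) && (e < k%:Z) by lia.
case: ifP => // _.
rewrite addrC (IH (e - 1) (e' + 1)); last by lia.
by rewrite (IH (e + 1) (e' - 1)) //; lia.
Qed.

Lemma a_step k m : (0 < k)%N ->
  \sum_(v < k) D k m.+1 v%:Z = 2 * \sum_(v < k) D k m v%:Z - 2 * D k m 0.
Proof.
case: k => // k _.
rewrite (eq_bigr (fun v : 'I_k.+1 => D k.+1 m (v%:Z - 1) + D k.+1 m (v%:Z + 1))); last first.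
  by move=> v _; rewrite D_S //; move: (ltn_ord v) => ?; lia.
rewrite big_split /=.
have s1 : \sum_(v < k.+1) D k.+1 m (v%:Z - 1) = \sum_(v < k) D k.+1 m v%:Z.
  rewrite big_ord_recl D_out /=; last by lia.
  rewrite add0r; apply: eq_bigr => v _; congr D; by rewrite /bump leq0n add1n; lia.
have s2 : \sum_(v < k.+1) D k.+1 m (v%:Z + 1) = \sum_(v < k) D k.+1 m (v%:Z + 1).
  rewrite big_ord_recr /= (@D_out k.+1 m (k%:Z + 1)) ?addr0 //; lia.
have t1 : \sum_(v < k.+1) D k.+1 m v%:Z = \sum_(v < k) D k.+1 m v%:Z + D k.+1 m k%:Z.
  by rewrite big_ord_recr.
have t2 : \sum_(v < k.+1) D k.+1 m v%:Z = D k.+1 m 0 + \sum_(v < k) D k.+1 m (v%:Z + 1).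
  rewrite big_ord_recl; congr (_ + _); apply: eq_bigr => v _; congr D; move: (lift0 v) => hl; lia.
have sy : D k.+1 m k%:Z = D k.+1 m 0 by apply: D_sym; lia.
rewrite s1 s2.
have eA : \sum_(v < k) D k.+1 m v%:Z = \sum_(v < k.+1) D k.+1 m v%:Z - D k.+1 m 0
  by rewrite t1 sy addrK.
have eB : \sum_(v < k) D k.+1 m (v%:Z + 1) = \sum_(v < k.+1) D k.+1 m v%:Z - D k.+1 m 0
  by rewrite t2; ring.
rewrite eA eB; ring.
Qed.

Lemma a_closed k m : (0 < k)%N ->
  \sum_(v < k) D k m v%:Z = (k * 2 ^ m)%:Z - \sum_(i < m) (2 ^ (m - i))%:Z * D k i 0.
Proof.
move=> hk; elim: m => [|m IH].
  rewrite big_ord0 subr0 expn0 muln1.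
  rewrite (eq_bigr (fun _ => 1)); last by move=> v _ /=; rewrite /ind; move: (ltn_ord v) => ?; case: ifP => //; lia.
  by rewrite sumr_const card_ord natz.
rewrite a_step // IH big_ord_recr /= subSnn expn1.
have hs : \sum_(i < m) (2 ^ (m.+1 - i))%:Z * D k i 0 =
    2 * \sum_(i < m) (2 ^ (m - i))%:Z * D k i 0.
  rewrite mulr_sumr; apply: eq_bigr => i _.
  rewrite subSn; last exact: ltnW (ltn_ord i).
  by rewrite expnS PoszM mulrA.
rewrite hs expnS mulnCA PoszM PoszM.
ring.
Qed.

Theorem theorem2 (n k : nat) (hn : (0 < n)%N) (hk : (0 < k)%N) (N : nat)
    (hN : (n <= N)%N) :
  (#|Hom_path n k|)%:Z =
    (k * 2 ^ n.-1)%:Z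
    - \sum_(i < n.-1)
        (2 ^ (n.-1 - i))%:Z *
        zsum_upto N (fun j : int =>
          binz i ((uphalf i)%:Z - j * (k.+1)%:Z)
          - binz i (((i + k.+1)./2)%:Z - j * (k.+1)%:Z)).
Proof.
case: n hn hN => // m _ hN /=.
have -> : Hom_path m.+1 k =
    [set x | is_hom x && (predT : pred 'I_k) (x ord_max)].
  by apply/setP => f; rewrite !inE andbT.
rewrite (@card_part _ k (fun h => is_hom h) (fun h : {ffun 'I_m.+1 -> 'I_k} => h ord_max) predT).
rewrite (big_morph Posz PoszD (erefl _)).
under eq_bigr do rewrite -/(S k m _) cardS.
rewrite a_closed //; congr (_ - _); apply: eq_bigr => i _.
rewrite (@D0_formula k N) //.
by move: (ltn_ord i) => ?; lia.
Qed.
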